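(* Let $n\ge1$ and $z\in\{1,\dots,n+1\}$. Let $v_{n,z}=(a_1,\dots,a_n)$ with $a_i=z+1-i$ for $i<z$ and $a_i=1$ for $i\ge z$, and $v^{n,z}=(b_1,\dots,b_n)$ with $b_i=1$ for $i<z$ and $b_i=i+2-z$ for $i\ge z$. Then $v_{n,z}$ and $v^{n,z}$ realize the same triangulation except for one anti-clockwise rotation: the triangulation $F(v^{n,z})$ is obtained from $F(v_{n,z})$ by replacing every vertex label $l$ by $l-1$ (and the label $0$ by $n+2$).
   Context: A Dyck path of length $2N$ is a word in $U,D$ with $N$ of each letter such that every prefix has at least as many $U$'s as $D$'s; $\mathfrak{D}_{2N}$ is their set. For $G\in\mathfrak{D}_{2(n+1)}$ let $m_i$ be the number of $U$'s before the $i$-th $D$; $G$ is encoded by $v_G=(m_1-0,m_2-1,\dots,m_n-(n-1))$. For $u=(u_1,\dots,u_m)\in\mathbb{N}^m$ and $1\le i\le m$, $T_i(u)$ is defined by: $r_0=u_i$; while some $l\in\{1,\dots,i\}$ has $r_k-u_l>0$, let $l_k$ be the largest such $l$ and $r_{k+1}=r_k-u_{l_k}$; if this stops at $r_t$ after $t\ge0$ steps, $T_i(u)=r_t+t$. For $u\in\mathbb{N}^n$, $f(u)$ is the Dyck path $G\in\mathfrak{D}_{2(n+1)}$ with $v_G=(T_1(u),\dots,T_n(u))$. For $G\in\mathfrak{D}_{2(n+1)}$ let $\lambda_G=(\lambda_1,\dots,\lambda_n)$, where $\lambda_i$ is the number of $D$'s before the $(n+2-i)$-th $U$ in $G$. The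 triangulation $g(G)$ of the polygon with vertices labelled $0,1,\dots,n+2$ is built as follows: for $i=1,\dots,n$, in the current polygon (with $n+4-i$ vertices labelled consecutively $0,1,\dots,n+3-i$) draw the diagonal between the vertices labelled $\lambda_i$ and $\lambda_i+2$, delete the vertex labelled $\lambda_i+1$ (cutting off a triangle), and relabel the remaining polygon consecutively: vertices with label $\le\lambda_i$ keep their labels, and each vertex with label $j+1>\lambda_i+1$ receives label $j$. The drawn diagonals, expressed in the original labels $0,\dots,n+2$, form $g(G)$. Finally $F=g\circ f$. Example: $G=UDUDUUDD$ ($n=3$) has $\lambda_G=(2,2,1)$ and $g(G)=\{\{2,4\},\{2,5\},\{1,5\}\}$. *)

(* Defs.v *)
From mathcomp Require Import all_boot.
Set Implicit Arguments. Unset Strict Implicit. Unset Printing Implicit Defensive.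

(* Dyck paths are words over bool: true = U, false = D. *)

(* The map T_i.  [pre] = (u_1,...,u_i), r = current value r_k, t = step count k.
   A step picks the largest l <= i with r - u_l > 0, i.e. u_l < r. *)
Fixpoint Tloop (fuel : nat) (pre : seq nat) (r t : nat) : nat :=
  match fuel with
  | 0 => r + t
  | f.+1 =>
      if has (fun x => x < r) pre
      then Tloop f pre (r - last 0 [seq x <- pre | x < r]) t.+1
      else r + t
  end.

(* T_i(u), for 1 <= i <= size u.  Fuel u_i + 1 suffices whenever the
   iteration terminates, in particular when all entries of u are >= 1. *)
Definition Tmap (i : nat) (u : seq nat) : nat :=
  let ui := nth 0 u i.-1 in Tloop ui.+1 (take i u) ui 0.

Fixpoint path_of_m (prev : nat) (m : seq nat) : seq bool :=
  match m with
  | [::] => [::]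
  | mi :: ms => nseq (mi - prev) true ++ false :: path_of_m mi ms
  end.

(* The Dyck path G in D_{2(n+1)} with v_G = v  (n = size v):
   m_i = v_i + (i-1) for i <= n, and m_{n+1} = n+1. *)
Definition path_of_v (v : seq nat) : seq bool :=
  let n := size v in
  path_of_m 0 (rcons [seq nth 0 v i + i | i <- iota 0 n] n.+1).

Definition fmap (u : seq nat) : seq bool :=
  path_of_v [seq Tmap i u | i <- iota 1 (size u)].

Definition D_before_kth_U (w : seq bool) (k : nat) : nat :=
  let pos := nth 0 [seq j <- iota 0 (size w) | nth false w j] k.-1 in
  count negb (take pos w).

Definition lambda_of (n : nat) (G : seq bool) : seq nat :=
  [seq D_before_kth_U G (n + 2 - i) | i <- iota 1 n].

(* Cutting-ear process: [poly] lists the original labels of the current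
   polygon's vertices in the order of their current labels 0,1,2,... *)
Fixpoint gsteps (lams : seq nat) (poly : seq nat) : seq (nat * nat) :=
  match lams with
  | [::] => [::]
  | l :: ls => (nth 0 poly l, nth 0 poly l.+2)
                 :: gsteps ls (take l.+1 poly ++ drop l.+2 poly)
  end.

(* g(G) for G in D_{2(n+1)}: list of diagonals (in original labels 0..n+2) *)
Definition gmap (n : nat) (G : seq bool) : seq (nat * nat) :=
  gsteps (lambda_of n G) (iota 0 (n + 3)).

Definition Fmap (u : seq nat) : seq (nat * nat) := gmap (size u) (fmap u).

Definition mem_diag (T : seq (nat * nat)) (x y : nat) : bool :=
  ((x, y) \in T) || ((y, x) \in T).

Definition v_low (n z : nat) : seq nat :=
  [seq (if i < z then z + 1 - i else 1) | i <- iota 1 n].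
Definition v_up (n z : nat) : seq nat :=
  [seq (if i < z then 1 else i + 2 - z) | i <- iota 1 n].

Definition relabel (n l : nat) : nat := if l == 0 then n + 2 else l.-1.

Definition relabel_tri (n : nat) (T : seq (nat * nat)) : seq (nat * nat) :=
  [seq (relabel n d.1, relabel n d.2) | d <- T].

(* Main.v *)
Require Import Defs.
From mathcomp Require Import all_boot zify.

Lemma Tloop_nohas f pre r t : ~~ has (fun x => x < r) pre -> Tloop f.+1 pre r t = r + t.
Proof. by move=> H /=; rewrite (negbTE H). Qed.

Lemma Tloop_step f pre r t : Tloop f.+1 pre r t =
  if has (fun x => x < r) pre then Tloop f pre (r - last 0 [seq x <- pre | x < r]) t.+1 else r + t.
Proof. by []. Qed.

Lemma nth_mapiota (f : nat -> nat) n i : 1 <= i <= n ->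
  nth 0 [seq f j | j <- iota 1 n] i.-1 = f i.
Proof.
move=> /andP[h1 h2]; rewrite (nth_map 0); last by rewrite size_iota; lia.
rewrite nth_iota; last lia. congr f; lia.
Qed.

Lemma take_mapiota (f : nat -> nat) n i : i <= n ->
  take i [seq f j | j <- iota 1 n] = [seq f j | j <- iota 1 i].
Proof. by move=> h; rewrite -map_take take_iota; congr map; congr iota; lia. Qed.

Lemma Tlow n z i : 1 <= i <= n ->
  Tmap i (v_low n z) = (if i < z then z + 1 - i else 1).
Proof.
move=> hi; rewrite /Tmap /v_low nth_mapiota // take_mapiota; last lia.
rewrite Tloop_nohas ?addn0 //; apply/hasPn => x /mapP[j]; rewrite mem_iota => hj ->.
case: ifP; case: ifP => //; lia.
Qed.

Lemma iotaS_r m k : iota m k.+1 = iota m k ++ [:: m + k].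
Proof. by rewrite -addn1 iotaD. Qed.

Lemma Tup n z i : 1 <= z -> 1 <= i <= n ->
  Tmap i (v_up n z) = (if i < z then 1 else 2).
Proof.
move=> hz hi; rewrite /Tmap /v_up nth_mapiota // take_mapiota; last lia.
case: ifP => hiz.
  rewrite Tloop_nohas //; apply/hasPn => x /mapP[j]; rewrite mem_iota => hj ->.
  case: ifP; lia.
case: i hi hiz => [|[|i]] hi hiz; first lia.
  have ez : z = 1 by lia.
  by rewrite ez.
set g := (fun j => if j < z then 1 else j + 2 - z).
rewrite iotaS_r map_cat Tloop_step.
have Hall : all (fun x => x < i.+2 + 2 - z) [seq g j | j <- iota 1 i.+1].
  apply/allP => x /mapP[j]; rewrite mem_iota => hj ->; rewrite /g; case: ifP; lia.
have -> : has (fun x => x < i.+2 + 2 - z) ([seq g j | j <- iota 1 i.+1] ++ [:: g (1 + i.+1)]) = true.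
  rewrite has_cat; apply/orP; left; apply/hasP; exists (g 1).
    by apply/mapP; exists 1 => //; rewrite mem_iota; lia.
  rewrite /g; case: ifP; lia.
rewrite filter_cat (all_filterP Hall).
have -> : [seq x <- [:: g (1 + i.+1)] | x < i.+2 + 2 - z] = [::].
  have hf : (g (1 + i.+1) < i.+2 + 2 - z) = false by rewrite /g; case: ifP; lia.
  by rewrite /= hf.
rewrite cats0 iotaS_r map_cat last_cat.
have -> : last (last 0 [seq g j | j <- iota 1 i]) [seq g j | j <- [:: 1 + i]] = g (1 + i) by [].
have -> : i.+2 + 2 - z - g (1 + i) = 1 by rewrite /g; case: ifP; lia.
have -> : i.+2 + 2 - z = (i.+3 - z).+1 by lia.
rewrite Tloop_nohas //.
have gpos : forall j, 0 < g j by move=> j; rewrite /g; case: ifP; lia.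
apply/hasPn => x hx.
have : all (fun x => 0 < x) (([seq g i | i <- iota 1 i] ++ [seq g i | i <- [:: 1 + i]]) ++ [seq g i | i <- [:: 1 + i.+1]]).
  by apply/allP => y; rewrite !mem_cat => /orP[/orP[]|] /mapP[j _ ->]; exact: gpos.
by move/allP => /(_ x hx); lia.
Qed.


Definition Pos (w : seq bool) := [seq j <- iota 0 (size w) | nth false w j].

Lemma Pos_cons b w : Pos (b :: w) = (if b then [:: 0] else [::]) ++ map S (Pos w).
Proof.
rewrite /Pos /= -(addn0 1) iotaDl filter_map.
have -> : [seq x <- iota 0 (size w) | preim (addn 1) (nth false (b :: w)) x]
  = [seq j <- iota 0 (size w) | nth false w j] by apply: eq_filter => j.
by case: b => //=; congr cons; apply: eq_map.
Qed.

Lemma size_Pos w : size (Pos w) = count id w.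
Proof. elim: w => [|b w IH]; first by []. by rewrite Pos_cons size_cat size_map IH; case: b. Qed.

Fixpoint dbk (w : seq bool) (k : nat) : nat :=
  match w with
  | [::] => 0
  | b :: w' => if b then (if k is k'.+2 then dbk w' k'.+1 else 0) else (dbk w' k).+1
  end.

Lemma Dbk w k : 1 <= k <= count id w -> D_before_kth_U w k = dbk w k.
Proof.
elim: w k => [|b w IH] k; first by move=> /= /andP[h1 h2]; lia.
rewrite /D_before_kth_U -/(Pos (b :: w)) Pos_cons.
case: b => /= hk.
  case: k hk => [|[|k]] hk //=.
  rewrite (nth_map 0); last by rewrite size_Pos; lia.
  rewrite -IH; last lia. by [].
rewrite (nth_map 0); last by rewrite size_Pos; lia.
rewrite /= -IH; last lia. by [].
Qed.

Lemma dbk_nseq j w k : 1 <= k ->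
  dbk (nseq j true ++ w) k = if k <= j then 0 else dbk w (k - j).
Proof.
elim: j k => [|j IH] k hk; first by rewrite subn0; case: k hk.
case: k hk => [|[|k]] hk //=. rewrite IH //.
Qed.

Lemma dbk_path p m k : path leq p m -> 1 <= k ->
  dbk (path_of_m p m) k = count (fun x => x < p + k) m.
Proof.
elim: m p k => [|x m IH] p k //= /andP[hpx hm] hk.
rewrite dbk_nseq //.
case: ifP => h.
  have Hall := order_path_min leq_trans hm.
  have -> : x < p + k = false by lia.
  rewrite add0n (eq_in_count (a2 := pred0)) ?count_pred0 //.
  move=> y hy /=; move/allP: Hall => /(_ y hy); lia.
rewrite /= IH //; last lia.
have -> : x < p + k = true by lia.
have -> : x + (k - (x - p)) = p + k by lia.
by [].
Qed.

Lemma count_path p m : path leq p m -> count id (path_of_m p m) = last p m - p.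
Proof.
elim: m p => [|x m IH] p /=; first by rewrite subnn.
move=> /andP[hpx hm]; rewrite count_cat count_nseq /= IH //.
have : x <= last x m.
  have Hall := order_path_min leq_trans hm.
  have := mem_last x m; rewrite in_cons => /orP[/eqP -> //|hl].
  by move/allP: Hall => /(_ _ hl).
lia.
Qed.

Lemma count_iota_lt k a N : count (fun j => j < k) (iota a N) = minn N (k - a).
Proof. elim: N a => [|N IH] a /=; first by rewrite min0n. rewrite IH; lia. Qed.


Lemma fmap_eq u : fmap u =
  path_of_m 0 (rcons [seq Tmap i.+1 u + i | i <- iota 0 (size u)] (size u).+1).
Proof.
rewrite /fmap /path_of_v size_map size_iota; congr path_of_m; congr rcons.
apply/eq_in_map => i; rewrite mem_iota => hi.
by rewrite (nth_map 0) ?size_iota // nth_iota.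
Qed.


Lemma size_vlow n z : size (v_low n z) = n. Proof. by rewrite size_map size_iota. Qed.
Lemma size_vup n z : size (v_up n z) = n. Proof. by rewrite size_map size_iota. Qed.

Lemma rcons_iota (g : nat -> nat) n : rcons [seq g j.+1 | j <- iota 0 n] (g n.+1) = [seq g j | j <- iota 1 n.+1].
Proof.
rewrite -addn1 iotaD map_cat cats1 add1n; congr rcons; last by rewrite addn1.
by rewrite -(addn0 1) iotaDl -map_comp.
Qed.


Lemma m_low n z : 1 <= z <= n + 1 ->
  rcons [seq Tmap i.+1 (v_low n z) + i | i <- iota 0 n] n.+1 = [seq maxn z j | j <- iota 1 n.+1].
Proof.
move=> hz; rewrite -rcons_iota; congr rcons; last lia.
apply/eq_in_map => i; rewrite mem_iota => hi; rewrite Tlow; last lia.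
case: ifP; lia.
Qed.

Lemma m_up n z : 1 <= z <= n + 1 ->
  rcons [seq Tmap i.+1 (v_up n z) + i | i <- iota 0 n] n.+1 =
  [seq minn (if z <= j then j + 1 else j) n.+1 | j <- iota 1 n.+1].
Proof.
move=> hz; rewrite -rcons_iota; congr rcons; last (case: ifP; lia).
apply/eq_in_map => i; rewrite mem_iota => hi; rewrite Tup; [|lia|lia].
case: ifP; case: ifP; lia.
Qed.


Lemma path0 s : sorted leq s -> path leq 0 s.
Proof. by case: s. Qed.

Lemma lambda_low n z : 1 <= z <= n + 1 ->
  lambda_of n (fmap (v_low n z)) = [seq (if n + 2 - i <= z then 0 else n + 1 - i) | i <- iota 1 n].
Proof.
move=> hz; rewrite /lambda_of fmap_eq size_vlow.
have hp : path leq 0 (rcons [seq Tmap i.+1 (v_low n z) + i | i <- iota 0 n] n.+1).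
  rewrite m_low //; apply: path0; apply: homo_sorted; last exact: iota_sorted.
  move=> x y hxy; lia.
apply/eq_in_map => i; rewrite mem_iota => hi.
rewrite Dbk; last by rewrite count_path // last_rcons; lia.
rewrite dbk_path //; last lia.
rewrite m_low // count_map.
case: (leqP (n + 2 - i) z) => hk.
  rewrite (eq_in_count (a2 := pred0)) ?count_pred0 // => j _ /=; lia.
rewrite (eq_in_count (a2 := fun j => j < n + 2 - i)) ?count_iota_lt; first lia.
move=> j; rewrite mem_iota /= => hj; lia.
Qed.


Lemma lambda_up n z : 1 <= z <= n + 1 ->
  lambda_of n (fmap (v_up n z)) = [seq (if n + 2 - i <= z then n + 1 - i else n - i) | i <- iota 1 n].
Proof.
move=> hz; rewrite /lambda_of fmap_eq size_vup.
have hp : path leq 0 (rcons [seq Tmap i.+1 (v_up n z) + i | i <- iota 0 n] n.+1).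
  rewrite m_up //; apply: path0; apply: homo_sorted; last exact: iota_sorted.
  move=> x y hxy /=; case: ifP; case: ifP; lia.
apply/eq_in_map => i; rewrite mem_iota => hi.
rewrite Dbk; last by rewrite count_path // last_rcons; lia.
rewrite dbk_path //; last lia.
rewrite m_up // count_map.
rewrite (eq_in_count (a2 := fun j => j < (if n + 2 - i <= z then n + 2 - i else n + 1 - i))).
  rewrite count_iota_lt; case: ifP; lia.
move=> j; rewrite mem_iota /= => hj; case: ifP; case: ifP; lia.
Qed.



Lemma gsteps_cons l ls poly : gsteps (l :: ls) poly =
  (nth 0 poly l, nth 0 poly l.+2) :: gsteps ls (take l.+1 poly ++ drop l.+2 poly).
Proof. by []. Qed.

Lemma G0 k l x a s : gsteps (k :: l) (iota 0 (k + 1) ++ x :: a :: s) =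
  (k, a) :: gsteps l (iota 0 (k + 1) ++ a :: s).
Proof.
rewrite gsteps_cons !nth_cat take_cat drop_cat !size_iota.
have h1 : k < k + 1 by lia. have h2 : (k.+2 < k + 1) = false by lia.
have h3 : (k.+1 < k + 1) = false by lia.
have -> : k.+2 - (k + 1) = 1 by lia. have -> : k.+1 - (k + 1) = 0 by lia.
rewrite h1 h2 h3 nth_iota //= cats0 add0n.
by [].
Qed.


Lemma G1 k c l a s : gsteps (rev (iota k c) ++ l) (iota 0 (k + c + 1) ++ a :: s) =
  [seq (j, a) | j <- rev (iota k c)] ++ gsteps l (iota 0 (k + 1) ++ a :: s).
Proof.
elim: c => [|c IH]; first by rewrite addn0.
rewrite -addn1 iotaD rev_cat (iotaD 0 (k + (c + 1)) 1) -[(_ ++ _) ++ a :: s]catA.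
have -> : rev (iota (k + c) 1) = [:: k + c] by [].
have -> : iota (0 + (k + (c + 1))) 1 ++ a :: s = (k + c + 1) :: a :: s by rewrite /= add0n addnA.
have -> : k + (c + 1) = k + c + 1 by lia.
rewrite cat1s G0 IH. by [].
Qed.


Lemma G2 c j b : gsteps (nseq c 0) (0 :: iota j c.+1 ++ [:: b]) = [seq (0, i) | i <- iota j.+1 c].
Proof.
elim: c j => [|c IH] j //=.
by rewrite -IH.
Qed.


Lemma phase2_up n z : 1 <= z ->
  gsteps (rev (iota 1 (z - 1))) (iota 0 z ++ [:: n + 1; n + 2]) = [seq (j, n + 2) | j <- rev (iota 1 (z - 1))].
Proof.
case: z => [|[|z]] // _.
have -> : z.+2 - 1 = z.+1 by lia.
have -> : rev (iota 1 z.+1) = z.+1 :: rev (iota 1 z).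
  by rewrite -(addn1 z) iotaD rev_cat add1n addn1.
have -> : z.+2 = z.+1 + 1 by lia.
rewrite G0.
have := G1 1 z [::] (n + 2) [::]. rewrite !cats0.
have -> : 1 + z + 1 = z.+1 + 1 by lia.
move=> ->. by [].
Qed.


Lemma map_iota_rev (f : nat -> nat) a b N :
  (forall i, i < N -> f (a + i) = b + (N - i.+1)) -> map f (iota a N) = rev (iota b N).
Proof.
move=> H; apply: (eq_from_nth (x0 := 0)); first by rewrite size_map size_rev !size_iota.
rewrite size_map size_iota => i hi.
rewrite (nth_map 0) ?size_iota // nth_iota // nth_rev ?size_iota // nth_iota; last lia.
by rewrite H.
Qed.

Lemma map_const0 (s : seq nat) : map (fun _ => 0) s = nseq (size s) 0.
Proof. by elim: s => //= ? ? ->. Qed.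

Lemma lam_up_split n z : 1 <= z <= n + 1 ->
  [seq (if n + 2 - i <= z then n + 1 - i else n - i) | i <- iota 1 n] =
  rev (iota (z - 1) (n + 1 - z)) ++ rev (iota 1 (z - 1)).
Proof.
move=> hz; have e : iota 1 n = iota 1 (n + 1 - z) ++ iota (1 + (n + 1 - z)) (z - 1).
  by rewrite -iotaD; congr iota; lia.
rewrite e map_cat; congr (_ ++ _); apply: map_iota_rev => i hi /=; case: ifP; lia.
Qed.

Lemma lam_low_split n z : 1 <= z <= n + 1 ->
  [seq (if n + 2 - i <= z then 0 else n + 1 - i) | i <- iota 1 n] =
  rev (iota z (n + 1 - z)) ++ nseq (z - 1) 0.
Proof.
move=> hz; have e : iota 1 n = iota 1 (n + 1 - z) ++ iota (1 + (n + 1 - z)) (z - 1).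
  by rewrite -iotaD; congr iota; lia.
rewrite e map_cat; congr (_ ++ _); first by apply: map_iota_rev => i hi /=; case: ifP; lia.
have -> : [seq (if n + 2 - i <= z then 0 else n + 1 - i) | i <- iota (1 + (n + 1 - z)) (z - 1)]
   = [seq 0 | i <- iota (1 + (n + 1 - z)) (z - 1)].
  apply/eq_in_map => i; rewrite mem_iota => hi; case: ifP; lia.
by rewrite map_const0 size_iota.
Qed.


Lemma Fmap_up n z : 1 <= z <= n + 1 ->
  Fmap (v_up n z) = [seq (j, n + 1) | j <- rev (iota (z - 1) (n + 1 - z))] ++
                    [seq (j, n + 2) | j <- rev (iota 1 (z - 1))].
Proof.
move=> hz; rewrite /Fmap /gmap size_vup lambda_up // lam_up_split //.
have -> : iota 0 (n + 3) = iota 0 (z - 1 + (n + 1 - z) + 1) ++ [:: n + 1; n + 2].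
  rewrite (_ : z - 1 + (n + 1 - z) + 1 = n + 1); last lia.
  rewrite (_ : n + 3 = (n + 1) + 2); last lia.
  rewrite iotaD add0n /=; congr (_ ++ [:: _; _]); lia.
rewrite G1 (_ : z - 1 + 1 = z); last lia.
rewrite phase2_up //; lia.
Qed.


Lemma Fmap_low n z : 1 <= z <= n + 1 ->
  Fmap (v_low n z) = [seq (j, n + 2) | j <- rev (iota z (n + 1 - z))] ++
                    [seq (0, i) | i <- iota 2 (z - 1)].
Proof.
move=> hz; rewrite /Fmap /gmap size_vlow lambda_low // lam_low_split //.
have -> : iota 0 (n + 3) = iota 0 (z + (n + 1 - z) + 1) ++ [:: n + 2].
  rewrite (_ : z + (n + 1 - z) + 1 = n + 2); last lia.
  rewrite (_ : n + 3 = (n + 2) + 1); last lia.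
  rewrite iotaD add0n /=; congr (_ ++ [:: _]); lia.
rewrite G1.
have -> : iota 0 (z + 1) = 0 :: iota 1 (z - 1).+1.
  by rewrite (_ : z + 1 = (z - 1).+2); last lia.
by rewrite cat_cons G2.
Qed.


Lemma mem_pairl (x y c : nat) t : ((x, y) \in [seq (j, c) | j <- t]) = (y == c) && (x \in t).
Proof.
apply/mapP/andP => [[j hj [-> ->]] | [/eqP -> hx]]; first by rewrite eqxx.
by exists x.
Qed.

Lemma mem_pairr (x y c : nat) t : ((x, y) \in [seq (c, j) | j <- t]) = (x == c) && (y \in t).
Proof.
apply/mapP/andP => [[j hj [-> ->]] | [/eqP -> hy]]; first by rewrite eqxx.
by exists y.
Qed.

Lemma final_cmp A (s : seq nat) c x y :
  mem_diag (A ++ [seq (j, c) | j <- rev s]) x y = mem_diag (A ++ [seq (c, j) | j <- s]) x y.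
Proof.
rewrite /mem_diag !mem_cat !mem_pairl !mem_pairr !mem_rev.
by case: ((x, y) \in A); case: ((y, x) \in A); case: (y == c); case: (x == c);
   case: (x \in s); case: (y \in s).
Qed.


Theorem lemma18 (n z : nat) :
  1 <= n -> 1 <= z <= n + 1 ->
  forall x y : nat,
    mem_diag (Fmap (v_up n z)) x y = mem_diag (relabel_tri n (Fmap (v_low n z))) x y.
Proof.
move=> hn hz x y.
rewrite Fmap_up // Fmap_low // /relabel_tri map_cat.
have -> : [seq (relabel n d.1, relabel n d.2) | d <- [seq (j, n + 2) | j <- rev (iota z (n + 1 - z))]]
   = [seq (j, n + 1) | j <- rev (iota (z - 1) (n + 1 - z))].
  rewrite -map_comp !map_rev; congr rev.
  rewrite {1}(_ : z = 1 + (z - 1)); last lia.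
  rewrite iotaDl -map_comp; apply: eq_map => j /=.
  by rewrite /relabel add1n /= addn2 /= addn1.
have -> : [seq (relabel n d.1, relabel n d.2) | d <- [seq (0, i) | i <- iota 2 (z - 1)]]
   = [seq (n + 2, j) | j <- iota 1 (z - 1)].
  rewrite -map_comp (iotaDl 1 1) -map_comp; apply: eq_map => j /=.
  by rewrite /relabel /= add0n.
exact: final_cmp.
Qed.
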